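(* There is no $*$-term $P$ such that $se(P)=X[\triangle\mapsto Y]$ for some $X\in\mathcal T_{A,\triangle}$ and $Y\in\mathcal T_A$ where $X\neq\triangle$, $X$ contains a leaf $\triangle$, and $X$ contains no leaf $\mathsf T$ and no leaf $\mathsf F$.
   Context: Let $A$ be a nonempty set of atoms; terms are closed terms over constants $\mathsf T,\mathsf F$, atoms $a\in A$, unary $\neg$, binary $\land^\circ$, $\lor^\circ$. Evaluation trees $\mathcal T_A$: $\mathsf T,\mathsf F\in\mathcal T_A$ and $(X\unlhd a\unrhd Y)\in\mathcal T_A$ for $X,Y\in\mathcal T_A$, $a\in A$. $\mathcal T_{A,\triangle}$: the same with leaves in $\{\mathsf T,\mathsf F,\triangle\}$. Leaf replacement $X[\ell_1\mapsto Y_1,\ldots]$ replaces every leaf labelled $\ell_i$ by $Y_i$. $se$: $se(\mathsf T)=\mathsf T$, $se(\mathsf F)=\mathsf F$, $se(a)=\mathsf T\unlhd a\unrhd\mathsf F$, $se(\neg P)=se(P)[\mathsf T\mapsto\mathsf F,\mathsf F\mapsto\mathsf T]$, $se(P\land^\circ Q)=se(P)[\mathsf T\mapsto se(Q)]$, $se(P\lor^\circ Q)=se(P)[\mathsf F\mapsto se(Q)]$. Syntactic categories ($a\in A$): $\mathsf T$-terms $P^{\mathsf T}::=\mathsf T\mid(a\land^\circ P^{\mathsf T})\lor^\circ P^{\mathsf T}$; $\mathsf F$-terms $P^{\mathsf F}::=\mathsf F\mid(a\lor^\circ P^{\mathsf F})\land^\circ P^{\mathsf F}$; $\ell$-terms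 $P^\ell::=(a\land^\circ P^{\mathsf T})\lor^\circ P^{\mathsf F}\mid(\neg a\land^\circ P^{\mathsf T})\lor^\circ P^{\mathsf F}$; $*$-terms $P^*::=P^c\mid P^d$, $P^c::=P^\ell\mid P^*\land^\circ P^d$, $P^d::=P^\ell\mid P^*\lor^\circ P^c$. *)

(* Defs.v *)
From Stdlib Require Import List.

Section Defs.
Variable A : Type.

Inductive term : Type :=
| tT : term
| tF : term
| tAtom : A -> term
| tNeg : term -> term
| tAnd : term -> term -> term
| tOr : term -> term -> term.

Inductive leaf : Type := lT | lF | lTri.

(* Trees with leaves in {T,F,triangle}; T_A is the subset with no triangle leaf. *)
Inductive etree : Type :=
| Leaf : leaf -> etree
| Node : etree -> A -> etree -> etree.   (* Node X a Y  =  X <| a |> Y *)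

Fixpoint has_leaf (l : leaf) (X : etree) : Prop :=
  match X with
  | Leaf l' => l' = l
  | Node X1 _ X2 => has_leaf l X1 \/ has_leaf l X2
  end.

Definition in_TA (X : etree) : Prop := ~ has_leaf lTri X.

Fixpoint repl (fT fF fTri : etree) (X : etree) : etree :=
  match X with
  | Leaf lT => fT
  | Leaf lF => fF
  | Leaf lTri => fTri
  | Node X1 a X2 => Node (repl fT fF fTri X1) a (repl fT fF fTri X2)
  end.

Fixpoint se (P : term) : etree :=
  match P with
  | tT => Leaf lT
  | tF => Leaf lF
  | tAtom a => Node (Leaf lT) a (Leaf lF)
  | tNeg P => repl (Leaf lF) (Leaf lT) (Leaf lTri) (se P)
  | tAnd P Q => repl (se Q) (Leaf lF) (Leaf lTri) (se P)
  | tOr P Q => repl (Leaf lT) (se Q) (Leaf lTri) (se P)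
  end.

Inductive Tterm : term -> Prop :=
| Tterm_T : Tterm tT
| Tterm_step : forall a P Q, Tterm P -> Tterm Q ->
    Tterm (tOr (tAnd (tAtom a) P) Q).

Inductive Fterm : term -> Prop :=
| Fterm_F : Fterm tF
| Fterm_step : forall a P Q, Fterm P -> Fterm Q ->
    Fterm (tAnd (tOr (tAtom a) P) Q).

Inductive lterm : term -> Prop :=
| lterm_pos : forall a P Q, Tterm P -> Fterm Q ->
    lterm (tOr (tAnd (tAtom a) P) Q)
| lterm_neg : forall a P Q, Tterm P -> Fterm Q ->
    lterm (tOr (tAnd (tNeg (tAtom a)) P) Q).

Inductive starterm : term -> Prop :=
| star_c : forall P, cterm P -> starterm P
| star_d : forall P, dterm P -> starterm P
with cterm : term -> Prop :=
| c_l : forall P, lterm P -> cterm P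
| c_and : forall P Q, starterm P -> dterm Q -> cterm (tAnd P Q)
with dterm : term -> Prop :=
| d_l : forall P, lterm P -> dterm P
| d_or : forall P Q, starterm P -> cterm Q -> dterm (tOr P Q).

End Defs.

Arguments tT {A}. Arguments tF {A}.
Arguments Leaf {A} _.
Arguments starterm {A} _. Arguments cterm {A} _. Arguments dterm {A} _.
Arguments lterm {A} _. Arguments Tterm {A} _. Arguments Fterm {A} _.
Arguments in_TA {A} _. Arguments has_leaf {A} _ _. Arguments repl {A} _ _ _ _.
Arguments se {A} _.

(* Main.v *)
Require Import Defs.
From Stdlib Require Import List Lia Classical.

Inductive Fac {A} (Y : etree A) : etree A -> Prop :=
| Fac_refl : Fac Y Y
| Fac_node : forall Z1 a Z2, Fac Y Z1 -> Fac Y Z2 -> Fac Y (Node A Z1 a Z2).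

Definition NFac {A} (Y Z : etree A) : Prop :=
  exists Z1 a Z2, Z = Node A Z1 a Z2 /\ Fac Y Z1 /\ Fac Y Z2.

Lemma Fac_inv {A} (Y Z : etree A) : Fac Y Z ->
  Y = Z \/ NFac Y Z.
Proof. destruct 1; [left; reflexivity | right; do 3 eexists; eauto]. Qed.

Definition sel {A} (fT fF fTri : etree A) (l : leaf) :=
  match l with lT => fT | lF => fF | lTri => fTri end.

Lemma repl_leaf {A} (fT fF fTri : etree A) l :
  repl fT fF fTri (Leaf l) = sel fT fF fTri l.
Proof. destruct l; reflexivity. Qed.

Definition Sub {A} (fT fF fTri : etree A) l W :=
  sel fT fF fTri l = W /\ forall l', l' <> l -> sel fT fF fTri l' = Leaf l'.

Lemma leaf_eq_dec (x y : leaf) : {x = y} + {x <> y}.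
Proof. decide equality. Qed.

Fixpoint tsize {A} (X : etree A) : nat :=
  match X with Leaf _ => 1 | Node _ X1 _ X2 => S (tsize X1 + tsize X2) end.

Section G.
Context {A : Type} (fT fF fTri : etree A) (l : leaf) (W : etree A)
  (HS : Sub fT fF fTri l W).

Lemma repl_noleaf S : ~ has_leaf l S -> repl fT fF fTri S = S.
Proof.
  induction S as [l0|S1 IH1 b S2 IH2]; intro H; cbn [has_leaf tsize] in *.
  - rewrite repl_leaf. apply (proj2 HS). exact H.
  - simpl; rewrite IH1, IH2; tauto.
Qed.

Lemma repl_size S : has_leaf l S -> tsize W <= tsize (repl fT fF fTri S).
Proof.
  induction S as [l0|S1 IH1 b S2 IH2]; intro H; cbn [has_leaf tsize] in *.
  - subst. rewrite repl_leaf, (proj1 HS). lia.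
  - simpl; destruct H as [H|H]; [apply IH1 in H|apply IH2 in H]; lia.
Qed.

Lemma has_keep k S : k <> l -> has_leaf k S -> has_leaf k (repl fT fF fTri S).
Proof.
  induction S as [l0|S1 IH1 b S2 IH2]; intros Hk H; cbn [has_leaf] in *.
  - subst. rewrite repl_leaf, (proj2 HS); simpl; auto.
  - simpl; tauto.
Qed.

Lemma has_sub k S : has_leaf l S -> has_leaf k W -> has_leaf k (repl fT fF fTri S).
Proof.
  induction S as [l0|S1 IH1 b S2 IH2]; intros H Hw; cbn [has_leaf] in *.
  - subst. rewrite repl_leaf, (proj1 HS); auto.
  - simpl; tauto.
Qed.

Hypothesis HW : has_leaf l W.

Lemma repl_isW S : repl fT fF fTri S = W -> S = Leaf l.
Proof.
  destruct S as [l0|S1 b S2]; intro H.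
  - destruct (leaf_eq_dec l0 l) as [->|n]; auto.
    rewrite repl_leaf, (proj2 HS l0 n) in H. subst W. simpl in HW. congruence.
  - simpl in H.
    assert (tsize W = S (tsize (repl fT fF fTri S1) + tsize (repl fT fF fTri S2)))
      by (rewrite <- H; reflexivity).
    destruct (Classical_Prop.classic (has_leaf l S1)) as [h1|h1].
    { apply repl_size in h1. lia. }
    destruct (Classical_Prop.classic (has_leaf l S2)) as [h2|h2].
    { apply repl_size in h2. lia. }
    rewrite (repl_noleaf S1 h1), (repl_noleaf S2 h2) in H. subst W.
    simpl in HW. tauto.
Qed.

Lemma repl_inj S1 : forall S2, repl fT fF fTri S1 = repl fT fF fTri S2 -> S1 = S2.
Proof.
  induction S1 as [l1|S11 IH1 b S12 IH2]; intros S2 H.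
  - destruct (leaf_eq_dec l1 l) as [->|n].
    + rewrite repl_leaf, (proj1 HS) in H. symmetry. apply repl_isW. auto.
    + rewrite repl_leaf, (proj2 HS l1 n) in H.
      destruct S2 as [l2|S21 b S22].
      * destruct (leaf_eq_dec l2 l) as [->|n2].
        -- rewrite repl_leaf, (proj1 HS) in H. subst W. simpl in HW. congruence.
        -- rewrite repl_leaf, (proj2 HS l2 n2) in H. exact H.
      * simpl in H. discriminate.
  - destruct S2 as [l2|S21 b2 S22].
    + destruct (leaf_eq_dec l2 l) as [->|n2].
      * rewrite repl_leaf, (proj1 HS) in H. apply repl_isW in H. discriminate.
      * rewrite repl_leaf, (proj2 HS l2 n2) in H. simpl in H. discriminate.
    + simpl in H. injection H as H1 H2 H3. subst.
      f_equal; auto.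
Qed.

Hypothesis HnW : forall Y, ~ NFac Y W.

Lemma fac_subst S : forall Y, Fac Y (repl fT fF fTri S) ->
  exists Y0, Y = repl fT fF fTri Y0 /\ Fac Y0 S.
Proof.
  induction S as [l0|S1 IH1 b S2 IH2]; intros Y H.
  - destruct (leaf_eq_dec l0 l) as [->|n].
    + rewrite repl_leaf, (proj1 HS) in H.
      destruct (Fac_inv _ _ H) as [->|h]; [|exfalso; eapply HnW; eauto].
      exists (Leaf l). split; [rewrite repl_leaf, (proj1 HS); auto | constructor].
    + rewrite repl_leaf, (proj2 HS l0 n) in H.
      destruct (Fac_inv _ _ H) as [->|[Z1 [a [Z2 [h _]]]]]; [|discriminate].
      exists (Leaf l0). split; [rewrite repl_leaf, (proj2 HS l0 n); auto | constructor].
  - simpl in H. destruct (Fac_inv _ _ H) as [->|[Z1 [a [Z2 [h [f1 f2]]]]]].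
    + exists (Node A S1 b S2). split; [reflexivity | constructor].
    + injection h as e1 e2 e3. subst.
      destruct (IH1 _ f1) as [Y1 [-> g1]].
      destruct (IH2 _ f2) as [Y2 [e g2]].
      apply repl_inj in e. subst.
      exists Y2. split; auto. constructor; auto.
Qed.

Lemma nfac_repl S : (exists L a R, S = Node A L a R) -> (forall Y, ~ NFac Y S) ->
  forall Y, ~ NFac Y (repl fT fF fTri S).
Proof.
  intros [L [a [R ->]]] HnS Y [Z1 [b [Z2 [h [f1 f2]]]]].
  simpl in h. injection h as e1 e2 e3. subst.
  destruct (fac_subst _ _ f1) as [Y1 [-> g1]].
  destruct (fac_subst _ _ f2) as [Y2 [e g2]].
  apply repl_inj in e. subst.
  apply (HnS Y2). do 3 eexists; eauto.
Qed.
End G.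

Ltac solve_sub := split; [reflexivity | intros [] Hne; try reflexivity; congruence].

Lemma some_leaf {A} (X : etree A) : exists l, has_leaf l X.
Proof. induction X as [l|X1 [l H] b X2 _]; [exists l; reflexivity | exists l; simpl; auto]. Qed.

Lemma Fac_leaf {A} (Y Z : etree A) l : Fac Y Z -> has_leaf l Y -> has_leaf l Z.
Proof. induction 1; simpl; auto. Qed.

Lemma Tterm_leaves {A} (P : term A) : Tterm P ->
  ~ has_leaf lF (se P) /\ ~ has_leaf lTri (se P).
Proof.
  induction 1 as [|a P Q _ [h1 h2] _ [h3 h4]]; simpl.
  - split; discriminate.
  - rewrite (repl_noleaf (Leaf lT) (se Q) (Leaf lTri) lF (se Q)) by (solve_sub || auto).
    simpl. tauto.
Qed.

Lemma Fterm_leaves {A} (P : term A) : Fterm P ->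
  ~ has_leaf lT (se P) /\ ~ has_leaf lTri (se P).
Proof.
  induction 1 as [|a P Q _ [h1 h2] _ [h3 h4]]; simpl.
  - split; discriminate.
  - rewrite (repl_noleaf (se Q) (Leaf lF) (Leaf lTri) lT (se Q)) by (solve_sub || auto).
    simpl. tauto.
Qed.

Definition Good {A} (Z : etree A) :=
  (exists L a R, Z = Node A L a R) /\ has_leaf lT Z /\ has_leaf lF Z /\
  forall Y, ~ NFac Y Z.

Lemma good_node {A} (L R : etree A) a :
  ~ has_leaf lF L -> ~ has_leaf lTri L -> ~ has_leaf lT R -> ~ has_leaf lTri R ->
  Good (Node A L a R).
Proof.
  intros h1 h2 h3 h4. split; [eauto|]. split; [|split].
  - destruct (some_leaf L) as [[] H]; simpl; tauto.
  - destruct (some_leaf R) as [[] H]; simpl; tauto.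
  - intros Y [Z1 [b [Z2 [e [f1 f2]]]]]. injection e as <- <- <-.
    destruct (some_leaf Y) as [[] H].
    + apply h3. eapply Fac_leaf; eauto.
    + apply h1. eapply Fac_leaf; eauto.
    + apply h2. eapply Fac_leaf; eauto.
Qed.

Lemma good_node' {A} (L R : etree A) a :
  ~ has_leaf lF L -> ~ has_leaf lTri L -> ~ has_leaf lT R -> ~ has_leaf lTri R ->
  Good (Node A R a L).
Proof.
  intros h1 h2 h3 h4. split; [eauto|]. split; [|split].
  - destruct (some_leaf L) as [[] H]; simpl; tauto.
  - destruct (some_leaf R) as [[] H]; simpl; tauto.
  - intros Y [Z1 [b [Z2 [e [f1 f2]]]]]. injection e as <- <- <-.
    destruct (some_leaf Y) as [[] H].
    + apply h3. eapply Fac_leaf; eauto.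
    + apply h1. eapply Fac_leaf; eauto.
    + apply h2. eapply Fac_leaf; eauto.
Qed.

Lemma lterm_good {A} (P : term A) : lterm P -> Good (se P).
Proof.
  destruct 1 as [a P Q HP HQ|a P Q HP HQ];
    destruct (Tterm_leaves P HP) as [h1 h2]; destruct (Fterm_leaves Q HQ) as [h3 h4];
    simpl.
  - rewrite (repl_noleaf (Leaf lT) (se Q) (Leaf lTri) lF (se Q)) by (solve_sub || auto).
    apply good_node; auto.
  - rewrite (repl_noleaf (Leaf lT) (se Q) (Leaf lTri) lF (se Q)) by (solve_sub || auto).
    apply good_node'; auto.
Qed.

Lemma good_and {A} (P Q : term A) : Good (se P) -> Good (se Q) -> Good (se (tAnd A P Q)).
Proof.
  intros [[L [a [R e]]] [t1 [f1 n1]]] [g2 [t2 [f2 n2]]]. simpl.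
  assert (HS : Sub (se Q) (Leaf lF) (Leaf lTri) lT (se Q)) by solve_sub.
  split; [rewrite e; simpl; eauto|]. split; [|split].
  - eapply has_sub; eauto.
  - eapply has_keep; eauto. discriminate.
  - eapply nfac_repl; eauto.
Qed.

Lemma good_or {A} (P Q : term A) : Good (se P) -> Good (se Q) -> Good (se (tOr A P Q)).
Proof.
  intros [[L [a [R e]]] [t1 [f1 n1]]] [g2 [t2 [f2 n2]]]. simpl.
  assert (HS : Sub (Leaf lT) (se Q) (Leaf lTri) lF (se Q)) by solve_sub.
  split; [rewrite e; simpl; eauto|]. split; [|split].
  - eapply has_keep; eauto. discriminate.
  - eapply has_sub; eauto.
  - eapply nfac_repl; eauto.
Qed.

Scheme star_ind' := Induction for starterm Sort Prop
with c_ind' := Induction for cterm Sort Prop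
with d_ind' := Induction for dterm Sort Prop.

Lemma star_good {A} (P : term A) : starterm P -> Good (se P).
Proof.
  apply (star_ind' A (fun P _ => Good (se P)) (fun P _ => Good (se P))
           (fun P _ => Good (se P))); intros; auto using lterm_good, good_and, good_or.
Qed.

Lemma fac_X {A} (Y X : etree A) : ~ has_leaf lT X -> ~ has_leaf lF X ->
  Fac Y (repl (Leaf lT) (Leaf lF) Y X).
Proof.
  induction X as [[]|X1 IH1 b X2 IH2]; simpl; intros h1 h2.
  - tauto.
  - tauto.
  - constructor.
  - constructor; auto.
Qed.

Theorem lemma3p3 (A : Type) (a0 : A) :
  ~ exists (P : term A) (X Y : etree A),
      starterm P /\
      in_TA Y /\
      X <> Leaf lTri /\
      has_leaf lTri X /\
      ~ has_leaf lT X /\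
      ~ has_leaf lF X /\
      se P = repl (Leaf lT) (Leaf lF) Y X.
Proof.
  intros [P [X [Y [HP [_ [Hne [_ [hT [hF e]]]]]]]]].
  destruct (star_good P HP) as [_ [_ [_ n]]].
  apply (n Y). rewrite e.
  destruct X as [[]|X1 b X2].
  - simpl in hT. tauto.
  - simpl in hF. tauto.
  - congruence.
  - simpl in hT, hF. exists (repl (Leaf lT) (Leaf lF) Y X1), b,
      (repl (Leaf lT) (Leaf lF) Y X2).
    split; [reflexivity|]. split; apply fac_X; tauto.
Qed.
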